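(* Let $k\ge 2$, let $H_0$ be a finite $k$-uniform hypergraph and let $(H_t)_{t\ge0}$ be the ILTH hypergraphs generated from $H_0$. For each $t$ let $A(t)$ be the set of 5-tuples $(u,e_1,v,e_2,w)$ with $u,v,w\in V(H_t)$ distinct, $e_1,e_2\in E(H_t)$ (not necessarily distinct), such that there is some $e_3\in E(H_t)$ with $u\in e_1\cap e_3$, $v\in e_1\cap e_2$ and $w\in e_2\cap e_3$. Then for all nonnegative integers $t$, $|A(t)|=(k^2)^t|A(0)|$.
   Context: A $k$-uniform hypergraph has every hyperedge a $k$-element subset of the vertex set. The ILTH process: given $H_t$, form $H_{t+1}$ by adding for each vertex $x\in V(H_t)$ a new vertex $x'$ (its clone), and taking $E(H_{t+1})=E(H_t)\cup\{(e\setminus\{x\})\cup\{x'\} : e\in E(H_t),\ x\in e\}$. *)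

(* Defs.v *)
From HB Require Import structures.
From mathcomp Require Import all_boot.
Set Implicit Arguments. Unset Strict Implicit. Unset Printing Implicit Defensive.

(* A hypergraph on the finite vertex type T is given by its edge set
   E : {set {set T}}; the vertex set is all of T. *)
Definition uniform (T : finType) (k : nat) (E : {set {set T}}) : Prop :=
  forall e, e \in E -> #|e| = k.

(* Vertex type of H_t: H_{t+1} has vertices inl x (old x) and inr x (clone x'). *)
Fixpoint ilth_V (T : finType) (t : nat) : finType :=
  match t with
  | 0 => T
  | t'.+1 => Finite.clone _ (ilth_V T t' + ilth_V T t')%type
  end.

Definition ilth_step (T : finType) (E : {set {set T}}) : {set {set (T + T)%type}} :=
  [set (@inl T T) @: e | e : {set T} in E] :|:
  [set ((@inl T T) @: (e :\ x)) :|: [set inr x] | e : {set T} in E, x : T in e].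

Fixpoint ilth_E (T : finType) (E0 : {set {set T}}) (t : nat) : {set {set ilth_V T t}} :=
  match t as t0 return {set {set ilth_V T t0}} with
  | 0 => E0
  | t'.+1 => ilth_step (ilth_E E0 t')
  end.

Definition A_set (T : finType) (E : {set {set T}}) :
    {set T * {set T} * T * {set T} * T} :=
  [set p : T * {set T} * T * {set T} * T |
     let: (u, e1, v, e2, w) := p in
     [&& u != v, v != w, u != w, e1 \in E, e2 \in E &
      [exists e3 in E,
         [&& u \in e1, u \in e3, v \in e1, v \in e2, w \in e2 & w \in e3]]]].

(* Main.v *)
Require Import Defs.
From mathcomp Require Import all_boot.
Set Implicit Arguments. Unset Strict Implicit. Unset Printing Implicit Defensive.

Definition Lf (T : finType) (e : {set T}) : {set T + T} := (@inl T T) @: e.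
Definition Cf (T : finType) (e : {set T}) (x : T) : {set T + T} :=
  ((@inl T T) @: (e :\ x)) :|: [set inr x].

Lemma inLl (T : finType) (e : {set T}) y : (inl y \in Lf e) = (y \in e).
Proof. by rewrite /Lf mem_imset //; move=> a b [->]. Qed.
Lemma inLr (T : finType) (e : {set T}) y : (inr y \in Lf e) = false.
Proof. by apply/imsetP => -[]. Qed.
Lemma inCl (T : finType) (e : {set T}) x y : (inl y \in Cf e x) = (y != x) && (y \in e).
Proof.
rewrite /Cf !inE mem_imset ?inE; last by move=> a b [->].
by rewrite orbF.
Qed.
Lemma inCr (T : finType) (e : {set T}) x y : (inr y \in Cf e x) = (y == x).
Proof.
rewrite /Cf !inE; case: imsetP => [[a _ //]|_] /=.
by apply/eqP/eqP => [[]|->].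
Qed.

Lemma stepP (T : finType) (E : {set {set T}}) e' :
  reflect (exists2 e, e \in E & (e' = Lf e \/ exists2 x, x \in e & e' = Cf e x))
          (e' \in ilth_step E).
Proof.
rewrite /ilth_step inE; apply: (iffP orP).
- case=> [/imsetP [e He ->]|/imset2P [e x He Hx ->]]; exists e => //; first by left.
  by right; exists x.
- case=> e He [->|[x Hx ->]]; [left; apply/imsetP; exists e => //|right].
  by apply/imset2P; exists e x.
Qed.

Lemma card_Lf (T : finType) (e : {set T}) : #|Lf e| = #|e|.
Proof. by rewrite card_imset //; move=> a b [->]. Qed.

Lemma card_Cf (T : finType) (e : {set T}) x : x \in e -> #|Cf e x| = #|e|.
Proof.
move=> Hx; rewrite /Cf cardsU ?card_imset; last by move=> a b [->].
rewrite cards1.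
have -> : (inl @: (e :\ x)) :&: [set inr x] = set0.
  apply/setP => a; rewrite !inE; case: a => [a|a] /=; first by rewrite andbF.
  by case: imsetP => [[]|].
by rewrite cards0 subn0 (cardsD1 x e) Hx addnC.
Qed.

Lemma step_unif k (T : finType) (E : {set {set T}}) :
  uniform k E -> uniform k (ilth_step E).
Proof.
move=> U e' /stepP [e He [->|[x Hx ->]]]; first by rewrite card_Lf U.
by rewrite card_Cf // U.
Qed.

Definition pv (T : finType) (a : T + T) : T := match a with inl y => y | inr y => y end.
Definition pe (T : finType) (e : {set T + T}) : {set T} :=
  [set y | (inl y \in e) || (inr y \in e)].
Definition proj (T : finType) (q : (T + T) * {set T + T} * (T + T) * {set T + T} * (T + T)) :
  T * {set T} * T * {set T} * T :=
  let: (u, e1, v, e2, w) := q in (pv u, pe e1, pv v, pe e2, pv w).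

Lemma pe_Lf (T : finType) (e : {set T}) : pe (Lf e) = e.
Proof. by apply/setP => y; rewrite inE inLl inLr orbF. Qed.
Lemma pe_Cf (T : finType) (e : {set T}) x : x \in e -> pe (Cf e x) = e.
Proof.
move=> Hx; apply/setP => y; rewrite inE inCl inCr.
by case: (eqVneq y x) => [->|] /=; rewrite ?Hx ?orbF.
Qed.

Lemma pe_step (T : finType) (E : {set {set T}}) e' : e' \in ilth_step E -> pe e' \in E.
Proof. by case/stepP => e He [->|[x Hx ->]]; rewrite ?pe_Lf ?pe_Cf. Qed.

Lemma pv_mem (T : finType) (e : {set T + T}) a : a \in e -> pv a \in pe e.
Proof. by case: a => a Ha; rewrite inE Ha ?orbT. Qed.

Lemma edge_inj (T : finType) (E : {set {set T}}) e' a b :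
  e' \in ilth_step E -> a \in e' -> b \in e' -> a != b -> pv a != pv b.
Proof.
case/stepP => e He [->|[x Hx ->]].
  by case: a => a; case: b => b; rewrite ?inLl ?inLr.
case: a => a; case: b => b; rewrite ?inCl ?inCr //=.
all: move=> Ha Hb Hab; apply/eqP => /= Eab; move: Ha Hb Hab; rewrite Eab.
all: by case: (eqVneq b x) => [->|]; rewrite ?eqxx.
Qed.

Lemma inA (T : finType) (E : {set {set T}}) u e1 v e2 w :
  ((u, e1, v, e2, w) \in A_set E) =
     [&& u != v, v != w, u != w, e1 \in E, e2 \in E &
      [exists e3 in E,
         [&& u \in e1, u \in e3, v \in e1, v \in e2, w \in e2 & w \in e3]]].
Proof. by rewrite inE. Qed.

Lemma proj_A (T : finType) (E : {set {set T}}) q :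
  q \in A_set (ilth_step E) -> proj q \in A_set E.
Proof.
case: q => [[[[u e1] v] e2] w]; rewrite /= !inA.
case/andP => uv /and5P [vw uw He1 He2 /existsP [e3 /andP [He3 /andP [u1 /and5P [u3 v1 v2 w2 w3]]]]].
apply/andP; split; last (apply/and5P; split); rewrite ?pe_step //.
- exact: (edge_inj He1).
- exact: (edge_inj He2).
- exact: (edge_inj He3).
apply/existsP; exists (pe e3); rewrite pe_step //=.
by rewrite !pv_mem.
Qed.

Definition lft (T : finType) (e : {set T}) (o : option T) : {set T + T} :=
  if o is Some x then Cf e x else Lf e.

Definition Lift (T : finType) (u : T) (e1 : {set T}) (v : T) (e2 : {set T}) (w : T)
  (o : option T * option T) : (T + T) * {set T + T} * (T + T) * {set T + T} * (T + T) :=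
  if (o.1 == Some u) && (o.2 == Some w) then (inl u, Cf e1 v, inr v, Cf e2 v, inl w)
  else (if o.1 == Some u then inr u else inl u, lft e1 o.1, inl v, lft e2 o.2,
        if o.2 == Some w then inr w else inl w).

Definition Nset (T : finType) (e : {set T}) (v : T) : {set option T} :=
  None |: (Some @: (e :\ v)).

Lemma inN (T : finType) (e : {set T}) v o :
  (o \in Nset e v) = if o is Some x then (x != v) && (x \in e) else true.
Proof.
rewrite /Nset !inE; case: o => [x|] //=.
by rewrite mem_imset ?inE //; move=> a b [].
Qed.

Lemma card_N (T : finType) (e : {set T}) v k : #|e| = k -> v \in e -> #|Nset e v| = k.
Proof.
move=> He Hv; rewrite /Nset cardsU1 card_imset; last by move=> a b [].
have -> : (None \notin [set Some x | x in e :\ v]) by apply/imsetP => -[].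
by rewrite -He (cardsD1 v e) Hv.
Qed.

Lemma Lf_step (T : finType) (E : {set {set T}}) e : e \in E -> Lf e \in ilth_step E.
Proof. by move=> He; apply/stepP; exists e => //; left. Qed.
Lemma Cf_step (T : finType) (E : {set {set T}}) e x :
  e \in E -> x \in e -> Cf e x \in ilth_step E.
Proof. by move=> He Hx; apply/stepP; exists e => //; right; exists x. Qed.

Lemma eqSome (T : eqType) (a b : T) : (Some a == Some b) = (a == b).
Proof. by apply/eqP/eqP => [[]|->]. Qed.

Ltac atom := solve [ done | by rewrite eq_sym | by rewrite eqxx ].
Ltac bsplit := repeat (apply/andP; split).
Ltac simpm := rewrite ?inLl ?inLr ?inCl ?inCr /= ?eqxx.
Ltac solveA e3 u w :=
  rewrite inA /=; bsplit; simpm; bsplit; try atom;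
  try (apply: Lf_step; atom); try (apply: Cf_step; atom);
  apply/existsP; first [ exists (Lf e3); bsplit; [apply: Lf_step; atom | ..];
                          simpm; bsplit; atom
                       | exists (Cf e3 u); bsplit; [apply: Cf_step; atom | ..];
                          simpm; bsplit; atom
                       | exists (Cf e3 w); bsplit; [apply: Cf_step; atom | ..];
                          simpm; bsplit; atom ].

Lemma Lift_in (T : finType) (E : {set {set T}}) u e1 v e2 w o :
  (u, e1, v, e2, w) \in A_set E -> o \in setX (Nset e1 v) (Nset e2 v) ->
  Lift u e1 v e2 w o \in A_set (ilth_step E) /\
  proj (Lift u e1 v e2 w o) = (u, e1, v, e2, w).
Proof.
rewrite inA => /andP [uv /and5P [vw uw He1 He2 /existsP [e3 /andP [He3 /andP [u1 /and5P [u3 v1 v2 w2 w3]]]]]].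
case: o => o1 o2; rewrite inE /= !inN => /andP [Ho1 Ho2].
case: o1 Ho1 => [x /andP[xv xe1]| _]; case: o2 Ho2 => [y /andP [yv ye2]| _].
- case: (eqVneq x u) => [->|xu]; case: (eqVneq y w) => [->|yw]; rewrite /Lift /= ?eqSome ?eqxx ?(negPf xu) ?(negPf yw) /=.
  + split; first solveA e3 u w.
    by rewrite /proj /= !pe_Cf.
  + split; first solveA e3 u w.
    by rewrite /proj /= !pe_Cf.
  + split; first solveA e3 u w.
    by rewrite /proj /= !pe_Cf.
  + split; first solveA e3 u w.
    by rewrite /proj /= !pe_Cf.
- case: (eqVneq x u) => [->|xu]; rewrite /Lift /= ?eqSome ?eqxx ?(negPf xu) /=.
  + split; first solveA e3 u w.
    by rewrite /proj /= !pe_Cf ?pe_Lf.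
  + split; first solveA e3 u w.
    by rewrite /proj /= !pe_Cf ?pe_Lf.
- case: (eqVneq y w) => [->|yw]; rewrite /Lift /= ?eqSome ?eqxx ?(negPf yw) /=.
  + split; first solveA e3 u w.
    by rewrite /proj /= !pe_Cf ?pe_Lf.
  + split; first solveA e3 u w.
    by rewrite /proj /= !pe_Cf ?pe_Lf.
- rewrite /Lift /=.
  split; first solveA e3 u w.
  by rewrite /proj /= !pe_Lf.
Qed.

Lemma lift_ex (T : finType) (E : {set {set T}}) e' : e' \in ilth_step E ->
  exists o, e' = lft (pe e') o /\ (if o is Some x then x \in pe e' else true).
Proof.
case/stepP => e He [->|[x Hx ->]]; first by exists None; rewrite pe_Lf.
by exists (Some x); rewrite pe_Cf.
Qed.

Lemma vlift (T : finType) (e : {set T}) o a :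
  a \in lft e o -> a = if o == Some (pv a) then inr (pv a) else inl (pv a).
Proof.
case: o => [x|]; case: a => a /=; rewrite ?eqSome ?inCl ?inCr ?inLl ?inLr //.
- by case/andP => /negPf; rewrite eq_sym => ->.
- by move/eqP => ->; rewrite eqxx.
Qed.

Lemma inr_lft (T : finType) (e : {set T}) o a : inr a \in lft e o -> o = Some a.
Proof. by case: o => [x|] /=; rewrite ?inCr ?inLr // => /eqP ->. Qed.

Lemma inl_lft (T : finType) (e : {set T}) o a : inl a \in lft e o -> o != Some a.
Proof.
case: o => [x|] /=; rewrite ?inCl ?inLl ?eqSome // => /andP [H _].
by rewrite eq_sym.
Qed.

Lemma inr_uniq (T : finType) (E : {set {set T}}) e' a b :
  e' \in ilth_step E -> inr a \in e' -> inr b \in e' -> a = b.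
Proof.
case/stepP => e He [->|[x Hx ->]]; rewrite ?inLr ?inCr //.
by move=> /eqP -> /eqP ->.
Qed.

Lemma Lift_inj (T : finType) (u : T) e1 v e2 w :
  {in setX (Nset e1 v) (Nset e2 v) &, injective (Lift u e1 v e2 w)}.
Proof.
have lft_inj : forall (e : {set T}) o o', o \in Nset e v -> o' \in Nset e v ->
    lft e o = lft e o' -> o = o'.
  move=> e [x|] [x'|] //= _ _ E.
  - have : inr x \in Cf e x by rewrite inCr.
    by rewrite E inCr => /eqP ->.
  - have : inr x \in Cf e x by rewrite inCr.
    by rewrite E inLr.
  - have : inr x' \in Cf e x' by rewrite inCr.
    by rewrite -E inLr.
move=> [o1 o2] [o1' o2']; rewrite !in_setX => /andP [H1 H2] /andP [H1' H2'].
rewrite /Lift /=.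
case C: ((o1 == Some u) && (o2 == Some w)); case C': ((o1' == Some u) && (o2' == Some w)).
- by move: C C' => /andP [/eqP -> /eqP ->] /andP [/eqP -> /eqP ->].
- by case.
- by case.
- case=> _ E1 E2 _.
  by rewrite (lft_inj _ _ _ H1 H1' E1) (lft_inj _ _ _ H2 H2' E2).
Qed.

Lemma fiber_sub (T : finType) (E : {set {set T}}) q u e1 v e2 w :
  q \in A_set (ilth_step E) -> proj q = (u, e1, v, e2, w) ->
  exists2 o, o \in setX (Nset e1 v) (Nset e2 v) & q = Lift u e1 v e2 w o.
Proof.
move=> HA Hp; have := proj_A HA; rewrite Hp inA.
case/andP => uv /and5P [vw uw He1 He2 /existsP [e3 /andP [He3 /andP [u1 /and5P [u3 v1 v2 w2 w3]]]]].
move: HA Hp; case: q => [[[[u' e1'] v'] e2'] w']; rewrite inA /=.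
case/andP => uv' /and5P [vw' uw' He1' He2' /existsP [e3' /andP [He3' /andP [u1' /and5P [u3' v1' v2' w2' w3']]]]].
case=> Hu Ee1 Hv Ee2 Hw.
have [o1 [E1 Ho1]] := lift_ex He1'; have [o2 [E2 Ho2]] := lift_ex He2'.
rewrite Ee1 in E1 Ho1; rewrite Ee2 in E2 Ho2; subst e1' e2'.
case: v' Hv uv' vw' v1' v2' => v0 /= Hv; subst v0 => uv' vw' v1' v2'.
- have o1v := inl_lft v1'; have o2v := inl_lft v2'.
  exists (o1, o2).
    rewrite in_setX !inN; apply/andP; split.
      by move: Ho1 o1v; destruct o1 as [x|] => //; rewrite eqSome eq_sym => -> ->.
    by move: Ho2 o2v; destruct o2 as [x|] => //; rewrite eqSome eq_sym => -> ->.
  rewrite /Lift /=.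
  case C: ((o1 == Some u) && (o2 == Some w)).
    move: C => /andP [/eqP C1 /eqP C2].
    have := vlift u1'; have := vlift w2'; rewrite Hu Hw C1 C2 !eqxx => Eu Ew.
    subst u' w'.
    by move: uw; rewrite (inr_uniq He3' u3' w3') eqxx.
  by rewrite {1}(vlift u1') {1}(vlift w2') Hu Hw.
- have o1v := inr_lft v1'; have o2v := inr_lft v2'; subst o1 o2.
  exists (Some u, Some w).
    by rewrite in_setX !inN u1 w2 uv eq_sym vw.
  rewrite /Lift /= !eqxx /=.
  rewrite {1}(vlift u1') {1}(vlift w2') Hu Hw /= !eqSome.
  by rewrite eq_sym (negPf uv) (negPf vw).
Qed.

Lemma fiber_card k (T : finType) (E : {set {set T}}) p :
  uniform k E -> p \in A_set E ->
  #|[set q in A_set (ilth_step E) | proj q == p]| = k * k.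
Proof.
case: p => [[[[u e1] v] e2] w] U Hp.
have -> : [set q in A_set (ilth_step E) | proj q == (u, e1, v, e2, w)] =
          Lift u e1 v e2 w @: setX (Nset e1 v) (Nset e2 v).
  apply/setP => q; rewrite inE; apply/andP/imsetP.
  - by case=> HA /eqP Hq; exact: (fiber_sub HA Hq).
  - case=> o Ho ->; have [H1 H2] := Lift_in Hp Ho; by rewrite H2 eqxx H1.
rewrite card_in_imset; last exact: Lift_inj.
move: Hp; rewrite inA => /andP [_ /and5P [_ _ He1 He2 /existsP [e3 /andP [_ /andP [_ /and5P [_ v1 v2 _ _]]]]]].
rewrite cardsX (card_N (U _ He1) v1) (card_N (U _ He2) v2) //.
Qed.

Lemma step_card k (T : finType) (E : {set {set T}}) :
  uniform k E -> #|A_set (ilth_step E)| = k ^ 2 * #|A_set E|.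
Proof.
move=> U.
rewrite -sum1_card (partition_big (@proj T) (mem (A_set E))) /=; last first.
  by move=> q; exact: proj_A.
transitivity (\sum_(p in A_set E) k * k).
  apply: eq_bigr => p Hp; rewrite -(fiber_card U Hp) -sum1_card.
  by apply: eq_bigl => q; rewrite inE.
by rewrite sum_nat_const mulnC mulnn.
Qed.

Lemma unif_t k (T : finType) (E0 : {set {set T}}) t :
  uniform k E0 -> uniform k (ilth_E E0 t).
Proof. by move=> U; elim: t => [|t IH] //=; exact: step_unif. Qed.

Theorem lemma4p7 (k : nat) (T : finType) (E0 : {set {set T}}) :
  2 <= k -> uniform k E0 ->
  forall t : nat, #|A_set (ilth_E E0 t)| = (k ^ 2) ^ t * #|A_set E0|.
Proof.
move=> _ U; elim=> [|t IH]; first by rewrite expn0 mul1n.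
rewrite /= (step_card (unif_t (t:=t) U)) IH mulnA -expnS.
done.
Qed.
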